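(* Let $F$ and $G$ be Fourier matrices of the same size $N$ with indexing groups $I_F,I_G$. (a) $F$ and $G$ are equivalent (i.e. $G=SFT^{-1}$ for some $N\times N$ enphased permutation matrices $S,T$) if and only if they are permutation equivalent (i.e. $G=PFR^{-1}$ for some permutation matrices $P,R$), i.e. if and only if $I_F$ and $I_G$ are isomorphic. (b) If $F$ and $G$ are equivalent, then $$\mathrm{Map}_{\mathcal P}(F,G)=\mathrm{Map}_{\mathcal S}(F,G)\cdot\mathrm{Stab}_{\mathcal Z}(F)=\mathrm{Stab}_{\mathcal Z}(G)\cdot\mathrm{Map}_{\mathcal S}(F,G).$$
   Context: For $n\ge1$, $F_n$ is the $n\times n$ matrix with rows and columns indexed by $\mathbb Z_n$ and entries $e^{2\pi i\,\tilde i\tilde j/n}$. A Fourier matrix is $F=F_{N_1}\otimes\cdots\otimes F_{N_r}$ of size $N=N_1\cdots N_r$, indexed by $I_F=\mathbb Z_{N_1}\times\cdots\times\mathbb Z_{N_r}$ with $F_{i,j}=\prod_x(F_{N_x})_{i_x,j_x}$; group indices correspond to ordinary indices via lexicographic order. An enphased permutation matrix is the product of a permutation matrix and a unitary diagonal matrix. Pairs $(S,T)$ of invertible matrices act on $N\times N$ matrices by $(S,T)X=SXT^{-1}$ and are multiplied componentwise. $\mathrm{Map}_{\mathcal P}(F,G)$ is the set of pairs of enphased permutation matrices mapping $F$ to $G$; $\mathrm{Map}_{\mathcal S}(F,G)$ the set of pairs of permutation matrices mapping $F$ to $G$; $\mathrm{Stab}_{\mathcal Z}(F)$ the set of pairs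 of matrices from $\{DZ_k:\ D\text{ unitary diagonal},\ k\in I_F\}$ mapping $F$ to $F$, where $Z_k$ is the permutation matrix with $(Z_k)_{i,i+k}=1$ for $i\in I_F$. Products of sets of pairs are sets of products. *)

(* Defs.v *)
From HB Require Import structures.
From mathcomp Require Import all_boot all_order all_algebra all_fingroup all_field.
Set Implicit Arguments. Unset Strict Implicit. Unset Printing Implicit Defensive.
Import Order.TTheory GRing.Theory Num.Theory.
Local Open Scope ring_scope.

(* Complex numbers: algC (algebraic complex numbers; all entries involved are
   roots of unity, hence algebraic). *)

(* omega n = e^{2 pi i / n}: n.-root (-1) is the n-th root of -1 of minimal
   nonnegative argument, i.e. e^{i pi/n} (and -1 for n = 1). *)
Definition omega (n : nat) : algC := (n.-root (-1)) ^+ 2.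

(* A Fourier matrix F_{N_1} (x) ... (x) F_{N_r} is given by ns = [:: N_1; ...; N_r].
   Ordinary index i < N corresponds (lexicographic order, first factor most
   significant) to the group index (digit ns i 0, ..., digit ns i (r-1))
   in Z_{N_1} x ... x Z_{N_r}. *)
Definition radix (ns : seq nat) (x : nat) : nat :=
  (\prod_(x.+1 <= y < size ns) nth 1 ns y)%N.

Definition digit (ns : seq nat) (i x : nat) : nat :=
  ((i %/ radix ns x) %% nth 1 ns x)%N.

Definition addnat (ns : seq nat) (i j : nat) : nat :=
  (\sum_(x < size ns) ((digit ns i x + digit ns j x) %% nth 1 ns x) * radix ns x)%N.

(* group addition of I_F on 'I_N (the default is never used when N = prod ns) *)
Definition addI (ns : seq nat) (N : nat) (i j : 'I_N) : 'I_N :=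
  insubd i (addnat ns i j).

Definition fourier (ns : seq nat) (N : nat) : 'M[algC]_N :=
  \matrix_(i < N, j < N)
     \prod_(x < size ns) omega (nth 1 ns x) ^+ (digit ns i x * digit ns j x)%N.

Definition index_groups_iso (ns ms : seq nat) (N : nat) : Prop :=
  exists phi : 'I_N -> 'I_N, bijective phi /\
    forall i j : 'I_N, phi (addI ns i j) = addI ms (phi i) (phi j).

Definition unitary_diag (N : nat) (D : 'M[algC]_N) : Prop :=
  exists d : 'rV[algC]_N, (forall i, `|d 0 i| = 1) /\ D = diag_mx d.

Definition enphased_perm (N : nat) (S : 'M[algC]_N) : Prop :=
  exists P D, is_perm_mx P /\ unitary_diag D /\ S = P *m D.

Definition Zshift (ns : seq nat) (N : nat) (k : 'I_N) : 'M[algC]_N :=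
  \matrix_(i < N, j < N) ((j == addI ns i k)%:R).

Definition Zclass (ns : seq nat) (N : nat) (S : 'M[algC]_N) : Prop :=
  exists D k, unitary_diag D /\ S = D *m Zshift ns k.

Definition act (N : nat) (p : 'M[algC]_N * 'M[algC]_N) (X : 'M[algC]_N) :=
  p.1 *m X *m invmx p.2.

Definition pairset (N : nat) := 'M[algC]_N * 'M[algC]_N -> Prop.

Definition MapP (N : nat) (F G : 'M[algC]_N) : pairset N :=
  fun p => enphased_perm p.1 /\ enphased_perm p.2 /\ act p F = G.

Definition MapS (N : nat) (F G : 'M[algC]_N) : pairset N :=
  fun p => is_perm_mx p.1 /\ is_perm_mx p.2 /\ act p F = G.

Definition StabZ (ns : seq nat) (N : nat) : pairset N :=
  fun p => Zclass ns p.1 /\ Zclass ns p.2 /\ act p (fourier ns N) = fourier ns N.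

Definition pairset_mul (N : nat) (A B : pairset N) : pairset N :=
  fun p => exists a b, A a /\ B b /\ p = (a.1 *m b.1, a.2 *m b.2).

Definition pairset_eq (N : nat) (A B : pairset N) : Prop := forall p, A p <-> B p.

Definition equivalent (N : nat) (F G : 'M[algC]_N) : Prop :=
  exists S T, enphased_perm S /\ enphased_perm T /\ G = S *m F *m invmx T.

Definition perm_equivalent (N : nat) (F G : 'M[algC]_N) : Prop :=
  exists P R, is_perm_mx P /\ is_perm_mx R /\ G = P *m F *m invmx R.

(* Main.v *)
Require Import Defs.
From HB Require Import structures.
From mathcomp Require Import all_boot all_order all_algebra all_fingroup all_field.
From mathcomp Require Import ring lra zify.
Import Order.TTheory GRing.Theory Num.Theory.
Local Open Scope ring_scope.

Lemma circ (R : realFieldType) (a b c s : R) :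
  a^+2 + b^+2 = 1 -> c^+2 + s^+2 = 1 -> 0 <= s -> c < 1 ->
  a * (c^+2 - s^+2) - b * (2 * c * s) <= a ->
  a * (c^+2 - s^+2) + b * (2 * c * s) <= a -> c <= a.
Proof.
move=> h1 h2 hs hc h3 h4.
have [s0|sp] := eqVneq s 0.
  have : c = -1 by subst s; nra.
  move=> ->; nra.
have sp' : 0 < s by rewrite lt_def sp hs.
have h7 : a * (c^+2 - s^+2) <= a by lra.
have h8 : c^+2 = 1 - s^+2 by lra.
rewrite h8 in h7.
have h5 : 0 <= a * s ^+ 2 by lra.
have a0 : 0 <= a.
  by rewrite -(pmulr_lge0 _ (exprn_gt0 2 sp')).
have h6 : `|b * c| <= a * s.
  have h9 : `|b * (2 * c * s)| <= a * (1 - (c^+2 - s^+2)).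
    rewrite ler_norml; apply/andP; split; lra.
  rewrite h8 in h9.
  have e : b * (2 * c * s) = (b * c) * (2 * s) by ring.
  rewrite e in h9; move: h9; rewrite normrM (ger0_norm (_ : 0 <= 2 * s)); last by lra.
  move=> h9; nra.
have hbc : (b * c) ^+ 2 <= (a * s)^+2.
  rewrite -real_normK ?num_real //; apply: lerXn2r; rewrite ?qualifE //= ?normr_ge0 //.
  nra.
nra.
Qed.

Lemma algR_leE (x y : algR) : (x <= y) = (algRval x <= algRval y).
Proof. by []. Qed.

Lemma circC (w y : algC) : `|w| = 1 -> `|y| = 1 -> 0 <= 'Im y -> y != 1 ->
  'Re (w * y^+2) <= 'Re w -> 'Re (w * (y^*)^+2) <= 'Re w -> 'Re y <= 'Re w.
Proof.
move=> nw ny hI hy1 h1 h2.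
pose a := in_algR (Creal_Re w); pose b := in_algR (Creal_Im w).
pose c := in_algR (Creal_Re y); pose s := in_algR (Creal_Im y).
have vE' (x : algR) : val x = algRval x by [].
suff : c <= a by [].
apply: (@circ algR a b c s).
- apply: val_inj; rewrite !vE' rmorphD !rmorphXn rmorph1 /= -normC2_Re_Im nw; by rewrite expr1n.
- apply: val_inj; rewrite !vE' rmorphD !rmorphXn rmorph1 /= -normC2_Re_Im ny; by rewrite expr1n.
- by rewrite algR_leE.
- rewrite lt_def algR_leE /=; apply/andP; split.
    apply: contra hy1 => /eqP hc; apply/eqP.
    have hc' : 'Re y = 1 by move/(congr1 val): hc.
    have : 'Im y ^+ 2 = 0.
      have := normC2_Re_Im y; rewrite ny hc' expr1n => e.
      by apply: (addrI 1); rewrite addr0 -e.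
    move/eqP; rewrite expf_eq0 /= => /eqP hi.
    by rewrite [y]Crect hc' hi mulr0 addr0.
  have := normC2_Re_Im y; rewrite ny expr1n => e.
  have : 'Re y <= `|'Re y| by rewrite real_ler_norm // Creal_Re.
  move=> h; apply: le_trans h _.
  rewrite -(@ler_pXn2r _ 2) ?qualifE //= ?normr_ge0 ?ler01 // expr1n real_normK ?Creal_Re //.
  by rewrite e lerDl -realEsqr Creal_Im.
- rewrite algR_leE !(rmorphB, rmorphM, rmorphD, rmorphXn, rmorph_nat) /=.
  rewrite [y ^+ 2]expr2 !(ReM, ImM) in h1.
  by apply: le_trans h1; rewrite le_eqVlt; apply/orP; left; apply/eqP; ring.
- rewrite algR_leE !(rmorphB, rmorphM, rmorphD, rmorphXn, rmorph_nat) /=.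
  rewrite [y^* ^+ 2]expr2 !(ReM, ImM, Re_conj, Im_conj) in h2.
  by apply: le_trans h2; rewrite le_eqVlt; apply/orP; left; apply/eqP; ring.
Qed.

Lemma circ_eq (w y : algC) : `|w| = 1 -> `|y| = 1 -> 'Re w = 'Re y -> w = y \/ w = y^*.
Proof.
move=> nw ny hr.
have : 'Im w ^+ 2 = 'Im y ^+ 2.
  have := normC2_Re_Im w; have := normC2_Re_Im y; rewrite nw ny hr => ->.
  by move/addrI.
move/eqP; rewrite -subr_eq0 subr_sqr mulf_eq0 => /orP[|] /eqP h.
  by left; apply/eqCP; split=> //; apply/eqP; rewrite -subr_eq0 h.
right; apply/eqCP; rewrite Re_conj Im_conj; split=> //.
by apply/eqP; rewrite -subr_eq0 opprK h.
Qed.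

Lemma unit_norm (y : algC) n : (0 < n)%N -> y ^+ n = -1 -> `|y| = 1.
Proof.
move=> n0 h; apply/eqP; rewrite -(pexpr_eq1 n0) ?normr_ge0 //.
by rewrite -normrX h normrN normr1.
Qed.

Lemma unit_norm1 (y : algC) n : (0 < n)%N -> y ^+ n = 1 -> `|y| = 1.
Proof.
move=> n0 h; apply/eqP; rewrite -(pexpr_eq1 n0) ?normr_ge0 //.
by rewrite -normrX h normr1.
Qed.

Lemma omega_prim n : (0 < n)%N -> n.-primitive_root (omega n).
Proof.
move=> n0; pose y : algC := n.-root (-1).
have yn : y ^+ n = -1 by rewrite /y rootCK.
have zn : omega n ^+ n = 1 by rewrite /omega -/y -exprM mulnC exprM yn sqrrN expr1n.
have [m pm mn] := prim_order_exists n0 zn.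
suff e : m = n by rewrite -[X in X.-primitive_root _]e.
have m0 := prim_order_gt0 pm.
apply/eqP; rewrite eqn_leq (dvdn_leq n0 mn) /=; rewrite leqNgt; apply/negP => lt_mn.
have y2m : y ^+ (2 * m) = 1 by rewrite exprM (prim_expr_order pm).
have n2 : (1 < n)%N by apply: leq_ltn_trans lt_mn.
have [zeta pz] := C_prim_root_exists (ltn0Sn (2 * n).-1).
rewrite prednK ?muln_gt0 // in pz.
have zn1 : zeta ^+ n = -1.
  have : (zeta ^+ n) ^+ 2 == 1 by rewrite -exprM mulnC (prim_expr_order pz).
  rewrite sqrf_eq1 => /orP[|/eqP //].
  by rewrite -(prim_order_dvd pz) => /(dvdn_leq n0); rewrite leqNgt ltn_Pmull.
have ny := unit_norm _ _ n0 yn.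
have nz := unit_norm _ _ n0 zn1.
have y2n : y ^+ (2 * n) = 1 by rewrite mulnC exprM yn sqrrN expr1n.
pose g k := zeta * y ^+ (2 * k).
have gmod k : g k = g (k %% m)%N.
  rewrite /g {1}(divn_eq k m) mulnDr exprD.
  have -> : (2 * (k %/ m * m) = 2 * m * (k %/ m))%N by lia.
  by rewrite exprM y2m expr1n mul1r.
pose h (k : 'I_m) := 'Re (g k).
have [k _ kmax] := @real_arg_maxP _ _ (Ordinal m0) xpredT h isT (fun _ _ => Creal_Re _).
set w := g k.
have gmax j : 'Re (g j) <= 'Re w.
  by rewrite gmod; have := kmax (Ordinal (ltn_pmod j m0)) isT.
have nw : `|w| = 1 by rewrite /w /g normrM normrX ny expr1n mulr1.
have wn : w ^+ n = -1.
  by rewrite /w /g exprMn zn1 -exprM mulnAC exprM y2n expr1n mulr1.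
have yy : y * y^* = 1 by rewrite -normCK ny expr1n.
have y1 : y != 1.
  apply/eqP => e; move: yn; rewrite e expr1n => /eqP; rewrite -subr_eq0 opprK => /eqP h2.
  have : (2%:R : algC) == 0 by rewrite -h2.
  by rewrite pnatr_eq0.
have le1 : 'Re y <= 'Re w.
  apply: circC => //; first by apply: Im_rootC_ge0.
    have -> : w * y ^+ 2 = g k.+1 by rewrite /w /g mulnS exprD; ring.
    exact: gmax.
  have -> : w * y^* ^+ 2 = g (k + m.-1)%N.
    rewrite /w /g mulnDr exprD mulrA; congr (_ * _).
    apply: (@mulIf _ (y ^+ 2)); first by rewrite expf_neq0 // -normr_eq0 ny oner_neq0.
    rewrite -exprMn (mulrC y^*) yy expr1n -exprD.
    by have -> : (2 * m.-1 + 2 = 2 * m)%N by lia.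
  exact: gmax.
have le2 : 'Re w <= 'Re y.
  have [iw|iw] := boolP (0 <= 'Im w).
    by apply: rootC_Re_max.
  rewrite -Re_conj; apply: rootC_Re_max n0 _ _.
    by rewrite -rmorphXn wn rmorphN rmorph1.
  rewrite Im_conj oppr_ge0; move: iw; rewrite -real_ltNge ?Creal_Im ?real0 //.
  by move/ltW.
have [e|e] : w = y \/ w = y^* by apply: circ_eq => //; apply/eqP; rewrite eq_le le1 le2.
  have : zeta ^+ (2 * m)%N = 1.
    have := congr1 (fun x => x ^+ (2 * m)%N) e; rewrite /= y2m /w /g exprMn.
    rewrite -exprM; have -> : (2 * k * (2 * m) = 2 * m * (2 * k))%N by lia.
    by rewrite (exprM y (2 * m)) y2m expr1n mulr1.
  move/eqP; rewrite -(prim_order_dvd pz) dvdn_pmul2l // => /(dvdn_leq m0).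
  by rewrite leqNgt lt_mn.
have : zeta ^+ (2 * m)%N = 1.
  have := congr1 (fun x => x ^+ (2 * m)%N) e; rewrite /= -rmorphXn y2m rmorph1 /w /g exprMn.
  rewrite -exprM; have -> : (2 * k * (2 * m) = 2 * m * (2 * k))%N by lia.
  by rewrite (exprM y (2 * m)) y2m expr1n mulr1.
move/eqP; rewrite -(prim_order_dvd pz) dvdn_pmul2l // => /(dvdn_leq m0).
by rewrite leqNgt lt_mn.
Qed.

Set Implicit Arguments. Unset Strict Implicit. Unset Printing Implicit Defensive.

Definition Pr (s : seq nat) : nat := (\prod_(n <- s) n)%N.
Definition enc (s : seq nat) (f : nat -> nat) : nat :=
  (\sum_(x < size s) f x * radix s x)%N.
Definition allpos (s : seq nat) := all (fun n => 0 < n)%N s.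

Lemma Pr_cons a t : Pr (a :: t) = (a * Pr t)%N.
Proof. by rewrite /Pr big_cons. Qed.

Lemma Pr_gt0 s : allpos s -> (0 < Pr s)%N.
Proof.
elim: s => [|a t IH] /=; first by rewrite /Pr big_nil.
by move=> /andP[a0 ht]; rewrite Pr_cons muln_gt0 a0 IH.
Qed.

Lemma nth_pos s x : allpos s -> (0 < nth 1 s x)%N.
Proof.
move=> h; case: (ltnP x (size s)) => hx; last by rewrite nth_default.
by move/allP: h; apply; rewrite mem_nth.
Qed.

Lemma radix_cons0 a t : radix (a :: t) 0 = Pr t.
Proof.
by rewrite /radix big_add1 /= /Pr [RHS](big_nth 1).
Qed.

Lemma radix_consS a t x : radix (a :: t) x.+1 = radix t x.
Proof. by rewrite /radix big_add1 /=. Qed.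

Lemma digit_consS a t i x : digit (a :: t) i x.+1 = digit t i x.
Proof. by rewrite /digit radix_consS. Qed.

Lemma digit_cons0 a t i : digit (a :: t) i 0 = ((i %/ Pr t) %% a)%N.
Proof. by rewrite /digit radix_cons0. Qed.

Lemma enc_cons a t f : enc (a :: t) f = (f 0%N * Pr t + enc t (fun x => f x.+1))%N.
Proof. by rewrite /enc /= big_ord_recl /= radix_cons0; congr (_ + _)%N; apply: eq_bigr => x _; rewrite radix_consS. Qed.

Lemma digit_small s i x : (size s <= x)%N -> digit s i x = 0%N.
Proof. by move=> h; rewrite /digit nth_default // modn1. Qed.

Lemma digit_lt s i x : allpos s -> (digit s i x < nth 1 s x)%N.
Proof. by move=> h; rewrite /digit ltn_pmod // nth_pos. Qed.

Lemma digit_shift s k j x : allpos s -> digit s (k * Pr s + j) x = digit s j x.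
Proof.
elim: s k j x => [|a t IH] k j x /=.
  by move=> _; rewrite !digit_small.
move=> /andP[a0 ht]; case: x => [|x].
  rewrite !digit_cons0 Pr_cons mulnA divnMDl ?Pr_gt0 //.
  by rewrite modnMDl.
by rewrite !digit_consS Pr_cons mulnA IH.
Qed.

Lemma enc_ext s f g : (forall x, (x < size s)%N -> f x = g x) -> enc s f = enc s g.
Proof. by move=> h; apply: eq_bigr => x _; rewrite h. Qed.

Lemma enc_lt s f : allpos s -> (forall x, (x < size s)%N -> (f x < nth 1 s x)%N) ->
  (enc s f < Pr s)%N.
Proof.
elim: s f => [|a t IH] f /=; first by move=> _ _; rewrite /enc big_ord0 /Pr big_nil.
move=> /andP[a0 ht] hf; rewrite enc_cons Pr_cons.
have h0 : (f 0%N < a)%N by apply: (hf 0%N).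
have h1 : (enc t (fun x => f x.+1) < Pr t)%N by apply: IH => // x hx; apply: (hf x.+1).
apply: (@leq_trans ((f 0%N).+1 * Pr t)%N).
  by rewrite mulSn; lia.
by rewrite leq_mul2r h0 orbT.
Qed.

Lemma digit_enc s f x : allpos s -> (forall x, (x < size s)%N -> (f x < nth 1 s x)%N) ->
  (x < size s)%N -> digit s (enc s f) x = f x.
Proof.
elim: s f x => [|a t IH] f x //= /andP[a0 ht] hf hx.
have h1 : (enc t (fun x => f x.+1) < Pr t)%N by apply: enc_lt => // y hy; apply: (hf y.+1).
rewrite enc_cons; case: x hx => [|x] hx.
  rewrite digit_cons0 divnMDl ?Pr_gt0 // divn_small // addn0 modn_small //.
  exact: (hf 0%N).
by rewrite digit_consS digit_shift // IH // => y hy; apply: (hf y.+1).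
Qed.

Lemma enc_digit s i : allpos s -> (i < Pr s)%N -> enc s (digit s i) = i.
Proof.
elim: s i => [|a t IH] i /=.
  by move=> _; rewrite /Pr big_nil ltnS leqn0 => /eqP ->; rewrite /enc big_ord0.
move=> /andP[a0 ht] hi; rewrite enc_cons digit_cons0.
have Pt := Pr_gt0 ht.
have hq : (i %/ Pr t < a)%N by rewrite ltn_divLR // -Pr_cons.
rewrite (modn_small hq).
rewrite (@enc_ext t _ (digit t (i %% Pr t))); last first.
  by move=> x _; rewrite digit_consS {1}(divn_eq i (Pr t)) digit_shift.
by rewrite IH ?ltn_pmod // -divn_eq.
Qed.

Lemma digit_inj s i j : allpos s -> (i < Pr s)%N -> (j < Pr s)%N ->
  (forall x, (x < size s)%N -> digit s i x = digit s j x) -> i = j.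
Proof.
by move=> hs hi hj h; rewrite -(enc_digit hs hi) -(enc_digit hs hj); apply: enc_ext.
Qed.

Section Grp.
Variables (ns : seq nat) (N : nat).
Hypotheses (hpos : allpos ns) (hN : Pr ns = N).

Local Notation nn x := (nth 1 ns x).
Local Notation dg := (digit ns).
Local Notation add := (@addI ns N).

Lemma Npos : (0 < N)%N.
Proof. by rewrite -hN Pr_gt0. Qed.

Definition zeroI : 'I_N := Ordinal Npos.

Lemma addnat_enc (i j : nat) :
  addnat ns i j = enc ns (fun x => ((dg i x + dg j x) %% nn x)%N).
Proof. by []. Qed.

Lemma enc_ltN f : (forall x, (x < size ns)%N -> (f x < nn x)%N) -> (enc ns f < N)%N.
Proof. by move=> h; rewrite -hN enc_lt. Qed.

Lemma addI_val (i j : 'I_N) : val (add i j) = addnat ns i j.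
Proof.
rewrite /addI insubdK //; rewrite /in_mem /= addnat_enc; apply: enc_ltN => x hx.
by rewrite ltn_pmod // nth_pos.
Qed.

Lemma digit_addI (i j : 'I_N) x : (x < size ns)%N ->
  dg (add i j) x = ((dg i x + dg j x) %% nn x)%N.
Proof.
move=> hx; rewrite addI_val addnat_enc digit_enc // => y hy.
by rewrite ltn_pmod // nth_pos.
Qed.

Lemma ord_ext (i j : 'I_N) : (forall x, (x < size ns)%N -> dg i x = dg j x) -> i = j.
Proof. by move=> h; apply: val_inj; apply: (digit_inj hpos); rewrite ?hN ?ltn_ord. Qed.

Lemma negI_lt (i : 'I_N) : (enc ns (fun x => ((nn x - dg i x) %% nn x)%N) < N)%N.
Proof. by apply: enc_ltN => x hx; rewrite ltn_pmod // nth_pos. Qed.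

Definition negI (i : 'I_N) : 'I_N := Ordinal (negI_lt i).

Lemma digit_negI (i : 'I_N) x : (x < size ns)%N ->
  dg (negI i) x = ((nn x - dg i x) %% nn x)%N.
Proof. by move=> hx; rewrite /= digit_enc // => y hy; rewrite ltn_pmod // nth_pos. Qed.

Lemma digit_zero x : dg zeroI x = 0%N.
Proof. by rewrite /digit /= div0n mod0n. Qed.

Lemma addIC (i j : 'I_N) : add i j = add j i.
Proof. by apply: ord_ext => x hx; rewrite !digit_addI // addnC. Qed.

Lemma addIA (i j k : 'I_N) : add i (add j k) = add (add i j) k.
Proof.
apply: ord_ext => x hx; rewrite !digit_addI //.
by rewrite modnDmr modnDml addnA.
Qed.

Lemma add0I (i : 'I_N) : add zeroI i = i.
Proof.
apply: ord_ext => x hx; rewrite !digit_addI // digit_zero add0n modn_small //.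
exact: digit_lt.
Qed.

Lemma addI0 (i : 'I_N) : add i zeroI = i.
Proof. by rewrite addIC add0I. Qed.

Lemma addNI (i : 'I_N) : add (negI i) i = zeroI.
Proof.
apply: ord_ext => x hx; rewrite !digit_addI // digit_negI // digit_zero.
rewrite modnDml subnK ?modnn //; apply: ltnW; exact: digit_lt.
Qed.

Lemma addIN (i : 'I_N) : add i (negI i) = zeroI.
Proof. by rewrite addIC addNI. Qed.

Lemma addIK (k i : 'I_N) : add (add i k) (negI k) = i.
Proof. by rewrite -addIA addIN addI0. Qed.

Lemma addI_inj (k : 'I_N) : injective (fun i => add i k).
Proof. by move=> i j /= /(congr1 (fun x => add x (negI k))); rewrite !addIK. Qed.

Lemma addI_cancel (k i j : 'I_N) : add i k = add j k -> i = j.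
Proof. exact: addI_inj. Qed.

Lemma negI_uniq (i j : 'I_N) : add i j = zeroI -> j = negI i.
Proof. by move=> h; apply: (@addI_cancel i); rewrite addIC h addNI. Qed.

Definition sh (k : 'I_N) : {perm 'I_N} := perm (@addI_inj k).

Lemma shE k i : sh k i = add i k.
Proof. by rewrite permE. Qed.

Lemma Zshift_perm k : Zshift ns k = perm_mx (sh k).
Proof.
by apply/matrixP => i j; rewrite !mxE shE eq_sym.
Qed.

Lemma sh_mulE (u r : 'I_N) : add u r = zeroI -> (sh u * sh r)%g = 1%g.
Proof.
move=> h; apply/permP => i; rewrite permM !shE perm1.
by rewrite -addIA h addI0.
Qed.

Local Notation F := (fourier ns N).

Lemma FE (i j : 'I_N) :
  F i j = \prod_(x < size ns) omega (nn x) ^+ (dg i x * dg j x).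
Proof. by rewrite mxE. Qed.

Lemma F_sym i j : F i j = F j i.
Proof. by rewrite !FE; apply: eq_bigr => x _; rewrite mulnC. Qed.

Lemma F0 j : F zeroI j = 1.
Proof. by rewrite FE big1 // => x _; rewrite digit_zero mul0n expr0. Qed.

Lemma F0r j : F j zeroI = 1.
Proof. by rewrite F_sym F0. Qed.

Lemma omega_modE n e : (0 < n)%N -> omega n ^+ (e %% n) = omega n ^+ e.
Proof. by move=> n0; rewrite prim_expr_mod // omega_prim. Qed.

Lemma F_add i k j : F (add i k) j = F i j * F k j.
Proof.
rewrite !FE -big_split /=; apply: eq_bigr => x _.
rewrite digit_addI // -exprD -mulnDl.
rewrite -omega_modE ?nth_pos // modnMml omega_modE ?nth_pos //.
Qed.

Lemma F_addr i j k : F i (add j k) = F i j * F i k.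
Proof. by rewrite F_sym F_add !(F_sym i). Qed.

Lemma F_neg i j : F (negI i) j * F i j = 1.
Proof. by rewrite -F_add addNI F0. Qed.

Lemma F_negr i j : F i (negI j) * F i j = 1.
Proof. by rewrite -F_addr addNI F0r. Qed.

Lemma F_neq0 i j : F i j != 0.
Proof. by apply/eqP => h; have := F_neg i j; rewrite h mulr0 => /eqP; rewrite eq_sym oner_eq0. Qed.

Lemma F_negE i j : F (negI i) j = F i (negI j).
Proof.
apply: (mulIf (F_neq0 i j)); rewrite F_neg.
by rewrite -(F_negr i j).
Qed.

Definition ev (x : nat) : nat := enc ns (fun y => ((y == x) && (1 < nn y)%N) : nat).

Lemma ev_lt x : (ev x < N)%N.
Proof.
apply: enc_ltN => y hy; case: (_ && _) /andP => [[_ h]|_] //=.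
exact: nth_pos.
Qed.

Lemma F_ev (a : 'I_N) x : (x < size ns)%N -> (1 < nn x)%N ->
  F a (Ordinal (ev_lt x)) = omega (nn x) ^+ dg a x.
Proof.
move=> hx h1; rewrite FE (bigD1 (Ordinal hx)) //= big1 ?mulr1.
  rewrite digit_enc // ?eqxx ?h1 ?muln1 //.
  by move=> y hy; case: (_ && _) /andP => [[_ h]|_] //=; exact: nth_pos.
move=> y hy; rewrite digit_enc //.
  by move: hy; rewrite -val_eqE /= => /negbTE ->; rewrite muln0.
by move=> z hz; case: (_ && _) /andP => [[_ h]|_] //=; exact: nth_pos.
Qed.

Lemma F_rows (a b : 'I_N) : (forall j, F a j = F b j) -> a = b.
Proof.
move=> h; apply: ord_ext => x hx.
have [h1|] := ltnP 1 (nn x); last first.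
  move=> hle; have p := nth_pos x hpos.
  have e1 : nth 1 ns x = 1%N by apply/eqP; rewrite eqn_leq hle p.
  have da := digit_lt a x hpos; have db := digit_lt b x hpos.
  by rewrite e1 in da db; move: da db; rewrite !ltnS !leqn0 => /eqP -> /eqP ->.
have := h (Ordinal (ev_lt x)); rewrite !F_ev // => /eqP.
rewrite (eq_prim_root_expr (omega_prim _ (nth_pos x hpos))) => /eqP.
by rewrite !modn_small // digit_lt.
Qed.

Lemma char_sum (psi : 'I_N -> algC) (k : 'I_N) :
  (forall i j, psi (add i j) = psi i * psi j) -> psi k != 1 ->
  \sum_i psi i = 0.
Proof.
move=> hom hk.
have e : \sum_i psi i = (\sum_i psi i) * psi k.
  rewrite [LHS](reindex_inj (@addI_inj k)) /= mulr_suml.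
  by apply: eq_bigr => i _; rewrite hom.
have : (\sum_i psi i) * (1 - psi k) = 0 by rewrite mulrBr mulr1 -e subrr.
by move/eqP; rewrite mulf_eq0 subr_eq0 (eq_sym 1) (negbTE hk) orbF => /eqP.
Qed.

Lemma F_sum (a : 'I_N) : a != zeroI -> \sum_i F i a = 0.
Proof.
move=> ha.
have [k hk] : exists k, F k a != 1.
  apply/existsP; apply: contraR ha => /existsPn h.
  apply/eqP; apply: F_rows => j; rewrite F0 F_sym.
  by have := h j; rewrite negbK => /eqP.
by apply: (char_sum (k := k)) => // i j; rewrite F_add.
Qed.

Lemma F_sumN (a : 'I_N) : \sum_i F i a = (a == zeroI)%:R * N%:R.
Proof.
have [->|ha] := eqVneq a zeroI; last by rewrite F_sum // mul0r.
by rewrite mul1r (eq_bigr (fun _ => 1)) => [|i _]; rewrite ?F0r // sumr_const card_ord.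
Qed.

Lemma F_sumNr (a : 'I_N) : \sum_i F a i = (a == zeroI)%:R * N%:R.
Proof. by rewrite -F_sumN; apply: eq_bigr => i _; rewrite F_sym. Qed.

Lemma F_dual (psi : 'I_N -> algC) :
  (forall i j, psi (add i j) = psi i * psi j) -> (forall i, psi i != 0) ->
  exists c, forall g, psi g = F g c.
Proof.
move=> hom hnz.
case: (boolP [exists c, [forall g, psi g == F g c]]).
  by case/existsP => c /forallP h; exists c => g; apply/eqP.
move/existsPn => hno; exfalso.
have hs c : \sum_g psi g * F g (negI c) = 0.
  have [g hg] : exists g, psi g * F g (negI c) != 1.
    move: (hno c) => /forallPn [g hg]; exists g; apply: contra hg => /eqP h.
    apply/eqP; apply: (mulIf (F_neq0 g (negI c))); rewrite h mulrC F_negr //.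
  by apply: (char_sum (k := g)) => // i j; rewrite hom F_add; ring.
pose h := zeroI.
have : \sum_c (\sum_g psi g * F g (negI c)) * F h c = 0.
  by rewrite big1 // => c _; rewrite hs mul0r.
rewrite (eq_bigr (fun c => \sum_g psi g * F (add (negI g) h) c)); last first.
  move=> c _; rewrite mulr_suml; apply: eq_bigr => g _.
  by rewrite F_add -F_negE mulrA.
rewrite exchange_big /=.
rewrite (eq_bigr (fun g => psi g * ((add (negI g) h == zeroI)%:R * N%:R))); last first.
  by move=> g _; rewrite -mulr_sumr F_sumNr.
rewrite (bigD1 h) //= big1 ?addr0.
  rewrite addNI eqxx mul1r => /eqP; rewrite mulf_eq0 (negbTE (hnz h)) /=.
  by rewrite pnatr_eq0 => /eqP hN0; have := Npos; rewrite hN0.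
move=> g hg; case: eqP; rewrite ?mul0r ?mulr0 // => e.
have eg : g = h.
  by rewrite /h in e *; rewrite addI0 in e; rewrite -(addI0 g) -e addIN.
by rewrite eg eqxx in hg.
Qed.

End Grp.

Section Mx.
Variable n : nat.
Implicit Types (A B : 'M[algC]_n) (s : {perm 'I_n}) (d : 'rV[algC]_n).

Lemma pmx_mulE s A : perm_mx s *m A = \matrix_(i, j) A (s i) j.
Proof. by rewrite -row_permE; apply/matrixP => i j; rewrite !mxE. Qed.

Lemma mul_pmxE s A : A *m perm_mx s = \matrix_(i, j) A i ((s^-1)%g j).
Proof.
have := col_permE (s^-1)%g A; rewrite invgK => <-.
by apply/matrixP => i j; rewrite !mxE.
Qed.

Lemma inv_from A B : A *m B = 1%:M -> invmx A = B.
Proof.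
move=> h; have [uA _] := mulmx1_unit h.
by rewrite -[invmx A]mulmx1 -h mulmxA mulVmx // mul1mx.
Qed.

Lemma invmx_perm s : invmx (perm_mx s : 'M[algC]_n) = perm_mx (s^-1)%g.
Proof. by apply: inv_from; rewrite -perm_mxM mulgV perm_mx1. Qed.

Lemma invmxM A B : A \in unitmx -> B \in unitmx -> invmx (A *m B) = invmx B *m invmx A.
Proof.
move=> uA uB; apply: inv_from.
by rewrite mulmxA -(mulmxA A) mulmxV // mulmx1 mulmxV.
Qed.

Definition ud d := forall i, `|d 0 i| = 1.

Lemma ud_neq0 d i : ud d -> d 0 i != 0.
Proof. by move=> h; rewrite -normr_eq0 h oner_neq0. Qed.

Definition dinv d : 'rV[algC]_n := \row_i (d 0 i)^-1.

Lemma ud_inv d : ud d -> ud (dinv d).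
Proof. by move=> h i; rewrite mxE normfV h invr1. Qed.

Lemma diag_const1 : diag_mx (\row_(i < n) (1 : algC)) = 1%:M.
Proof. by apply/matrixP => i j; rewrite !mxE. Qed.

Lemma diag_dinv d : ud d -> diag_mx d *m diag_mx (dinv d) = 1%:M.
Proof.
move=> h; rewrite mulmx_diag -diag_const1; congr diag_mx.
by apply/rowP => i; rewrite !mxE divff // ud_neq0.
Qed.

Lemma diag_unit d : ud d -> diag_mx d \in unitmx.
Proof. by move=> h; have [] := mulmx1_unit (diag_dinv h). Qed.

Lemma invmx_diag d : ud d -> invmx (diag_mx d) = diag_mx (dinv d).
Proof. by move=> h; apply: inv_from; apply: diag_dinv. Qed.

Lemma ud_mul d e : ud d -> ud e -> ud (\row_j (d 0 j * e 0 j)).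
Proof. by move=> hd he i; rewrite mxE normrM hd he mulr1. Qed.

Lemma ud_perm d s : ud d -> ud (\row_i d 0 (s i)).
Proof. by move=> h i; rewrite mxE h. Qed.

Lemma perm_diag s d : perm_mx s *m diag_mx d = diag_mx (\row_i d 0 (s i)) *m perm_mx s.
Proof.
rewrite pmx_mulE mul_diag_mx; apply/matrixP => i j; rewrite !mxE.
by rewrite mulr_natr.
Qed.

Lemma diag_perm d s : diag_mx d *m perm_mx s = perm_mx s *m diag_mx (\row_i d 0 ((s^-1)%g i)).
Proof.
rewrite perm_diag; congr (diag_mx _ *m _); apply/rowP => i; rewrite !mxE.
by rewrite permK.
Qed.

Definition EP A := exists s d, ud d /\ A = perm_mx s *m diag_mx d.

Lemma EPE A : enphased_perm A <-> EP A.
Proof.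
split.
  case=> P [D [/is_perm_mxP[s ->] [[d [hd ->]] ->]]].
  by exists s, (\row_j d 0 j); split => [i|]; rewrite ?mxE //; congr (_ *m diag_mx _); apply/rowP => j; rewrite mxE.
case=> s [d [hd ->]]; exists (perm_mx s), (diag_mx d); split; first exact: perm_mx_is_perm.
by split => //; exists d.
Qed.

Lemma EP_unit A : EP A -> A \in unitmx.
Proof. by case=> s [d [hd ->]]; rewrite unitmx_mul unitmx_perm diag_unit. Qed.

Lemma EP_mul A B : EP A -> EP B -> EP (A *m B).
Proof.
case=> s [d [hd ->]] [t [e [he ->]]].
exists (s * t)%g, (\row_j ((\row_i d 0 ((t^-1)%g i)) 0 j * e 0 j)); split.
  by apply: ud_mul => //; apply: ud_perm.
by rewrite perm_mxM -!mulmxA (mulmxA (diag_mx d)) diag_perm -!mulmxA mulmx_diag.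
Qed.

Lemma EP_inv A : EP A -> EP (invmx A).
Proof.
case=> s [d [hd ->]]; rewrite invmxM ?unitmx_perm ?diag_unit // invmx_diag // invmx_perm.
rewrite diag_perm; exists (s^-1)%g; eexists; split; last by reflexivity.
by apply: ud_perm; apply: ud_inv.
Qed.

Lemma EP_perm s : EP (perm_mx s : 'M[algC]_n).
Proof. by exists s, (\row_(i < n) 1); split => [i|]; rewrite ?mxE ?normr1 // diag_const1 mulmx1. Qed.

End Mx.

Section ZC.
Variables (ns : seq nat) (N : nat).
Hypotheses (hpos : allpos ns) (hN : Pr ns = N).

Lemma sh_inv k : ((sh hpos hN k)^-1)%g = sh hpos hN (negI hpos hN k).
Proof.
by rewrite -[sh _ _ (negI _ _ k)]mul1g -(mulVg (sh hpos hN k)) -mulgA sh_mulE ?mulg1 // addIN.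
Qed.

Lemma Zclass_EP (S : 'M[algC]_N) : Zclass ns S -> EP S.
Proof.
case=> D [k [[d [hd ->]] ->]]; rewrite Zshift_perm diag_perm.
by eexists; eexists; split; last reflexivity; apply: ud_perm.
Qed.

Lemma Zclass_mk (d : 'rV[algC]_N) k : ud d -> Zclass ns (diag_mx d *m Zshift ns k).
Proof. by move=> hd; exists (diag_mx d), k; split => //; exists d. Qed.

Lemma Zclass_inv (S : 'M[algC]_N) : Zclass ns S -> Zclass ns (invmx S).
Proof.
case=> D [k [[d [hd ->]] ->]]; rewrite Zshift_perm.
rewrite invmxM ?unitmx_perm ?diag_unit // invmx_diag // invmx_perm sh_inv perm_diag.
rewrite -Zshift_perm; apply: Zclass_mk; apply: ud_perm; exact: ud_inv.
Qed.

End ZC.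

Section Core.
Variables (ns ms : seq nat) (N : nat).
Hypotheses (hf : allpos ns) (hfN : Pr ns = N) (hg : allpos ms) (hgN : Pr ms = N).

Local Notation F := (fourier ns N).
Local Notation G := (fourier ms N).

Lemma zFG : zeroI hf hfN = zeroI hg hgN.
Proof. exact: val_inj. Qed.

Lemma core (S T : 'M[algC]_N) : EP S -> EP T -> Defs.act (S, T) F = G ->
  pairset_mul (MapS F G) (@StabZ ns N) (S, T).
Proof.
move=> hS hT hact.
have uT := EP_unit hT; have uS := EP_unit hS.
have eSF : S *m F = G *m T by rewrite -hact /Defs.act /= mulmxKV.
case: hS eSF hact => s1 [d1 [hd1 eS]]; case: hT uT => s2 [d2 [hd2 eT]] uT.
rewrite {}eS {}eT => eSF hact.
have E a b : d1 0 a * F a b = G ((s1^-1)%g a) ((s2^-1)%g b) * d2 0 b.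
  have := congr1 (fun M : 'M[algC]_N => M ((s1^-1)%g a) b) eSF.
  rewrite /= -mulmxA pmx_mulE mul_diag_mx mulmxA mul_mx_diag mul_pmxE !mxE permKV => h.
  exact: h.
pose z := zeroI hf hfN.
have G0 j : G z j = 1 by rewrite /z zFG F0.
have G0r j : G j z = 1 by rewrite /z zFG F0r.
pose r := s1 z; pose c := s2 z.
pose u := negI hf hfN r; pose v := negI hf hfN c.
pose a1 : 'M[algC]_N := perm_mx (s1 * sh hf hfN u)%g.
pose a2 : 'M[algC]_N := perm_mx (s2 * sh hf hfN v)%g.
have ua1 : a1 \in unitmx by apply: unitmx_perm.
have ua2 : a2 \in unitmx by apply: unitmx_perm.
have hG : G = a1 *m F *m invmx a2.
  apply/matrixP => i j.
  rewrite /a2 invmx_perm mul_pmxE invgK mxE /a1 pmx_mulE mxE !permM !shE.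
  set a := s1 i; set b := s2 j.
  have Ea := E a b; have Er := E r b; have Ec := E a c; have Erc := E r c.
  have ha : (s1^-1)%g a = i by rewrite /a permK.
  have hb : (s2^-1)%g b = j by rewrite /b permK.
  have hr : (s1^-1)%g r = z by rewrite /r permK.
  have hc : (s2^-1)%g c = z by rewrite /c permK.
  rewrite ha hb in Ea; rewrite hr G0 mul1r in Er; rewrite hc G0r mul1r in Ec.
  rewrite hr hc G0 mul1r in Erc.
  have nd2 : d2 0 b != 0 by apply: ud_neq0.
  have nd1 : d1 0 r != 0 by apply: ud_neq0.
  apply: (mulIf nd2); rewrite -Ea -Er.
  rewrite !(F_add hf hfN, F_addr hf hfN).
  have k1 : F u b * F r b = 1.
  exact: (F_neg hf hfN r b).
  have k2 : F a v * F a c = 1 by exact: (F_negr hf hfN a c).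
  have k3 : F u v = F r c.
    have nz := F_neq0 hf hfN r v.
    apply: (mulIf nz).
    have e1 : F u v * F r v = 1 by exact: (F_neg hf hfN r v).
    have e2 : F r v * F r c = 1 by exact: (F_negr hf hfN r c).
    by rewrite e1 mulrC e2.
  rewrite k3.
  have -> : d1 0 a = d1 0 r * F r c / F a c.
    by apply: (mulIf (F_neq0 hf hfN a c)); rewrite divfK ?F_neq0 // Ec Erc.
  have hFac := F_neq0 hf hfN a c.
  have e2 : F a v = (F a c)^-1.
    by apply: (mulIf hFac); rewrite k2 mulVf.
  have e1 : F u b = (F r b)^-1.
    by apply: (mulIf (F_neq0 hf hfN r b)); rewrite k1 mulVf ?F_neq0.
  rewrite e1 e2; field.
  by rewrite hFac F_neq0.
pose b1 : 'M[algC]_N := diag_mx (\row_i d1 0 (sh hf hfN r i)) *m Zshift ns r.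
pose b2 : 'M[algC]_N := diag_mx (\row_i d2 0 (sh hf hfN c i)) *m Zshift ns c.
have ur : addI ns u r = z by rewrite /u addNI.
have uc : addI ns v c = z by rewrite /v addNI.
have eb1 : a1 *m b1 = perm_mx s1 *m diag_mx d1.
  rewrite /a1 /b1 Zshift_perm -perm_diag mulmxA -perm_mxM -mulgA (sh_mulE ur).
  by rewrite mulg1.
have eb2 : a2 *m b2 = perm_mx s2 *m diag_mx d2.
  rewrite /a2 /b2 Zshift_perm -perm_diag mulmxA -perm_mxM -mulgA (sh_mulE uc).
  by rewrite mulg1.
have Zb1 : Zclass ns b1 by apply: Zclass_mk; apply: ud_perm.
have Zb2 : Zclass ns b2 by apply: Zclass_mk; apply: ud_perm.
have ub2 : b2 \in unitmx by apply: EP_unit; apply: (Zclass_EP hf hfN).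
exists (a1, a2), (b1, b2); split; last split; last by rewrite /= eb1 eb2.
  by split; [apply: perm_mx_is_perm | split; [apply: perm_mx_is_perm | rewrite /Defs.act /= -hG]].
split=> //; split=> //.
rewrite /Defs.act /=.
move: hact; rewrite /Defs.act /= -eb1 -eb2 invmxM // hG => h.
have h2 : a1 *m (b1 *m F *m invmx b2) *m invmx a2 = a1 *m F *m invmx a2.
  by rewrite -h !mulmxA.
have h3 := congr1 (fun M : 'M[algC]_N => invmx a1 *m (M *m a2)) h2.
by rewrite /= !mulmxKV // !mulKmx // in h3.
Qed.

End Core.

Lemma act_mul N (p q : 'M[algC]_N * 'M[algC]_N) X :
  p.2 \in unitmx -> q.2 \in unitmx ->
  Defs.act (p.1 *m q.1, p.2 *m q.2) X = Defs.act p (Defs.act q X).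
Proof. by move=> u1 u2; rewrite /Defs.act /= invmxM // !mulmxA. Qed.

Lemma act_inv N (p : 'M[algC]_N * 'M[algC]_N) X Y :
  p.1 \in unitmx -> p.2 \in unitmx -> Defs.act p X = Y ->
  Defs.act (invmx p.1, invmx p.2) Y = X.
Proof.
by move=> u1 u2 <-; rewrite /Defs.act /= invmxK !mulmxA mulVmx // mul1mx mulmxKV.
Qed.

Lemma pmx_actE N (s t : {perm 'I_N}) (X : 'M[algC]_N) :
  perm_mx s *m X *m invmx (perm_mx t) = \matrix_(i, j) X (s i) (t j).
Proof.
by rewrite invmx_perm mul_pmxE invgK pmx_mulE; apply/matrixP => i j; rewrite !mxE.
Qed.

Lemma is_perm_EP N (P : 'M[algC]_N) : is_perm_mx P -> EP P.
Proof. by case/is_perm_mxP => s ->; apply: EP_perm. Qed.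

Lemma is_perm_unit N (P : 'M[algC]_N) : is_perm_mx P -> P \in unitmx.
Proof. by case/is_perm_mxP => s ->; apply: unitmx_perm. Qed.

Lemma is_perm_inv N (P : 'M[algC]_N) : is_perm_mx P -> is_perm_mx (invmx P).
Proof. by case/is_perm_mxP => s ->; rewrite invmx_perm perm_mx_is_perm. Qed.

Section Final.
Variables (ns ms : seq nat) (N : nat).
Hypotheses (hf : allpos ns) (hfN : Pr ns = N) (hg : allpos ms) (hgN : Pr ms = N).

Local Notation F := (fourier ns N).
Local Notation G := (fourier ms N).

Lemma MapPE (A B : 'M[algC]_N) p : MapP A B p <-> [/\ EP p.1, EP p.2 & Defs.act p A = B].
Proof.
split; first by case=> /EPE h1 [/EPE h2 h3].
by case=> /EPE h1 /EPE h2 h3; split=> //; split.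
Qed.

Lemma partb1 : pairset_eq (MapP F G) (pairset_mul (MapS F G) (@StabZ ns N)).
Proof.
move=> [S T]; split.
  by case/MapPE => h1 h2 h3; apply: (core hf hfN hg hgN).
case=> a [b [[pa1 [pa2 ha]] [[zb1 [zb2 hb]] ->]]].
have ua2 := is_perm_unit pa2.
have ub2 := EP_unit (Zclass_EP hf hfN zb2).
apply/MapPE; split.
- exact: EP_mul (is_perm_EP pa1) (Zclass_EP hf hfN zb1).
- exact: EP_mul (is_perm_EP pa2) (Zclass_EP hf hfN zb2).
- by rewrite act_mul // hb ha.
Qed.

Lemma partb2 : pairset_eq (MapP F G) (pairset_mul (@StabZ ms N) (MapS F G)).
Proof.
move=> [S T]; split.
  case/MapPE => /= h1 h2 h3.
  have uS := EP_unit h1; have uT := EP_unit h2.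
  have h4 : Defs.act (invmx S, invmx T) G = F by apply: (act_inv (p := (S, T))).
  have := core hg hgN hf hfN (EP_inv h1) (EP_inv h2) h4.
  case=> a [b [[pa1 [pa2 ha]] [[zb1 [zb2 hb]] /= [e1 e2]]]].
  have ua1 := is_perm_unit pa1; have ua2 := is_perm_unit pa2.
  have ub1 := EP_unit (Zclass_EP hg hgN zb1); have ub2 := EP_unit (Zclass_EP hg hgN zb2).
  exists (invmx b.1, invmx b.2), (invmx a.1, invmx a.2); split; last split.
  - split; first exact: Zclass_inv.
    split; first exact: Zclass_inv.
    exact: (act_inv (p := b)).
  - split; first exact: is_perm_inv.
    split; first exact: is_perm_inv.
    exact: (act_inv (p := a)).
  - by rewrite /= -!invmxM // -e1 -e2 !invmxK.
case=> b [a [[zb1 [zb2 hb]] [[pa1 [pa2 ha]] ->]]].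
have ua2 := is_perm_unit pa2.
have ub2 := EP_unit (Zclass_EP hg hgN zb2).
apply/MapPE; split.
- exact: EP_mul (Zclass_EP hg hgN zb1) (is_perm_EP pa1).
- exact: EP_mul (Zclass_EP hg hgN zb2) (is_perm_EP pa2).
- by rewrite act_mul // ha hb.
Qed.

Lemma parta1 : equivalent F G <-> perm_equivalent F G.
Proof.
split.
  case=> S [T [/EPE h1 [/EPE h2 h3]]].
  have := core hf hfN hg hgN h1 h2 (esym h3).
  case=> a [b [[pa1 [pa2 ha]] _]].
  by exists a.1, a.2; split=> //; split=> //; rewrite -ha.
case=> P [R [p1 [p2 h]]]; exists P, R; split; first exact/EPE/is_perm_EP.
by split=> //; exact/EPE/is_perm_EP.
Qed.

Lemma parta2 : perm_equivalent F G <-> index_groups_iso ns ms N.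
Proof.
split.
  case=> P [R [/is_perm_mxP[s ->] [/is_perm_mxP[t ->] h]]].
  have Ge i j : G i j = F (s i) (t j) by rewrite h pmx_actE mxE.
  have hom i i' : s (addI ms i i') = addI ns (s i) (s i').
    apply: (F_rows hf hfN) => j'.
    rewrite -[j'](permKV t) -Ge (F_add hg hgN) !Ge (F_add hf hfN).
    done.
  exists (s^-1)%g; split; first by exists s => x; rewrite ?permK ?permKV.
  move=> i j; apply: (@perm_inj _ s).
  by rewrite hom !permKV.
case=> phi [[phinv c1 c2] hom].
have homi g h : phinv (addI ms g h) = addI ns (phinv g) (phinv h).
  by rewrite -[g]c2 -[h]c2 -hom !c1.
pose psi (j : 'I_N) (g : 'I_N) := F (phinv g) j.
have hpsi j : exists c, forall g, psi j g = G g c.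
  apply: (F_dual hg hgN).
    by move=> g h; rewrite /psi homi (F_add hf hfN).
  by move=> g; apply: F_neq0.
pose tau (j : 'I_N) := odflt j [pick c | [forall g, psi j g == G g c]].
have htau j g : G g (tau j) = F (phinv g) j.
  rewrite /tau; case: pickP => [c /forallP hc /=|hn]; first by rewrite -(eqP (hc g)).
  exfalso; have [c hc] := hpsi j; have := hn c; rewrite /=.
  by move/negbT/forallPn => [g' /eqP]; rewrite hc.
have tinj : injective tau.
  move=> j1 j2 e; apply: (F_rows hf hfN) => i.
  rewrite F_sym [RHS]F_sym -[i]c1 -!htau.
  by rewrite e.
have pinj : injective phinv by apply: (can_inj c2).
exists (perm_mx (perm pinj)), (perm_mx (perm tinj)^-1)%g.
split; first exact: perm_mx_is_perm.
split; first exact: perm_mx_is_perm.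
rewrite pmx_actE; apply/matrixP => i j; rewrite mxE permE.
by rewrite -htau; congr (G i _); rewrite -(permE tinj) permKV.
Qed.

End Final.

Unset Implicit Arguments.

Theorem lemma4p22 (N : nat) (ns ms : seq nat) :
  all (fun n => 0 < n)%N ns -> all (fun n => 0 < n)%N ms ->
  (\prod_(n <- ns) n)%N = N -> (\prod_(n <- ms) n)%N = N ->
  let F := fourier ns N in let G := fourier ms N in
  ((equivalent F G <-> perm_equivalent F G) /\
   (perm_equivalent F G <-> index_groups_iso ns ms N)) /\
  (equivalent F G ->
     pairset_eq (MapP F G) (pairset_mul (MapS F G) (@StabZ ns N)) /\
     pairset_eq (MapP F G) (pairset_mul (@StabZ ms N) (MapS F G))).
Proof.
move=> hf hg hfN hgN F G.
split; first split.
- exact: (parta1 hf hfN hg hgN).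
- exact: (parta2 hf hfN hg hgN).
- by move=> _; split; [exact: (partb1 hf hfN hg hgN) | exact: (partb2 hf hfN hg hgN)].
Qed.
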